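(* Let $f\in \mathfrak{D}$ have degree $j$, write $f=\sum_i f_i$ with $f_i$ homogeneous of degree $i$, let $A=R/\operatorname{Ann}_R f$, let $a$ be an integer with $0\le a\le j$, set $f_{\ge j-a}=f_j+f_{j-1}+\cdots+f_{j-a}$ and $A'=R/\operatorname{Ann}_R(f_{\ge j-a})$. Then the partial symmetric decompositions agree: $\mathcal{D}_{\le a}(A)=\mathcal{D}_{\le a}(A')$. These partial decompositions depend only on $f$ modulo $\mathfrak{D}_{\le j-a-1}$ up to the action of a unit of $R$ (i.e. if $g\in\mathfrak{D}$ has degree $j$ and $g-u\circ f\in \mathfrak{D}_{\le j-a-1}$ for some unit $u\in R$, then $\mathcal{D}_{\le a}(R/\operatorname{Ann}_R g)=\mathcal{D}_{\le a}(A)$). Moreover $f_{\ge j-a}$ is an $(a+1)$-modification of $f$, i.e. $(\operatorname{Ann}_R f)\cap \mathfrak{m}_R^{\,j-a}=(\operatorname{Ann}_R f_{\ge j-a})\cap\mathfrak{m}_R^{\,j-a}$.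
   Context: Let $\mathsf{k}$ be a field, $R=\mathsf{k}\{x_1,\ldots,x_r\}$ the formal power series ring with maximal ideal $\mathfrak{m}_R$, and $\mathfrak{D}=\mathsf{k}_{DP}[X_1,\ldots,X_r]$ the divided power algebra (divided powers $X_i^{[n]}$), on which $R$ acts by contraction: $x^{\alpha}\circ X^{[\beta]}=X^{[\beta-\alpha]}$ if $\beta-\alpha\ge 0$ componentwise and $0$ otherwise, extended bilinearly. $\mathfrak{D}_t$ denotes the forms of degree $t$ and $\mathfrak{D}_{\le t}$ the elements of degree at most $t$. For $f\in\mathfrak{D}$ of degree $j$, $\operatorname{Ann}_R f=\{\varphi\in R:\varphi\circ f=0\}$ and $A=R/\operatorname{Ann}_R f$ is an Artinian Gorenstein algebra with maximal ideal $\mathfrak{m}_A$ and socle degree $j$ (largest $i$ with $\mathfrak{m}_A^i\neq 0$). Its associated graded algebra is $A^*=\bigoplus_i \mathfrak{m}_A^i/\mathfrak{m}_A^{i+1}$. For $a\ge 0$ the ideal $C_A(a)\subset A^*$ has degree-$i$ component equal to the image in $\mathfrak{m}_A^i/\mathfrak{m}_A^{i+1}$ of $\mathfrak{m}_A^{i}\cap(0:\mathfrak{m}_A^{\,j+1-a-i})$; $Q_A(a)=C_A(a)/C_A(a+1)$, $H_A(a)$ is the Hilbert function of $Q_A(a)$ ($H_A(a)_i=\dim_{\mathsf{k}}Q_A(a)_i$), and the partial symmetric decomposition is $\mathcal{D}_{\le a}(A)=(H_A(0),\ldots,H_A(a))$. An Artinian Gorenstein ideal $J$ (or a dual generator $g$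 with $J=\operatorname{Ann}_R g$) is called an $b$-modification of $I=\operatorname{Ann}_R f$ (socle degree $j$) if $I\cap\mathfrak{m}_R^{\,j+1-b}=J\cap\mathfrak{m}_R^{\,j+1-b}$. *)

(* Defs.v *)
From HB Require Import structures.
From mathcomp Require Import all_boot all_order all_algebra.
From mathcomp Require Import mpoly.
From Stdlib Require Import ClassicalEpsilon.

Set Implicit Arguments.
Unset Strict Implicit.
Unset Printing Implicit Defensive.

Import GRing.Theory.
Local Open Scope ring_scope.

Section Gorenstein.
Variables (K : fieldType) (r : nat).

(* R = K{x_1,...,x_r}: a formal power series is its coefficient function on
   monomials x^alpha, alpha : 'X_{1..r}. *)
Definition series := 'X_{1..r} -> K.

Definition sadd (u v : series) : series := fun g => u g + v g.

Definition smul (u v : series) : series := fun g =>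
  \sum_(al : 'X_{1..r < (mdeg g).+1} | lem (bmnm al) g)
     u (bmnm al) * v (g - bmnm al)%MM.

Definition sone : series := fun g => if g == 0%MM then 1 else 0.

Definition sunit (u : series) : Prop := exists v, smul u v = sone.

Definition mpowR (i : nat) (u : series) : Prop :=
  forall al : 'X_{1..r}, (mdeg al < i)%N -> u al = 0.

(* Divided power algebra D = K_DP[X_1..X_r]: an element is represented by
   {mpoly K[r]}, the coefficient p@_beta being the coefficient of the
   divided monomial X^[beta] (only the K-vector space structure is used). *)
Definition DP := {mpoly K[r]}.

(* contraction  x^alpha o X^[beta] = X^[beta - alpha] if alpha <= beta, else 0,
   extended bilinearly; the result is given by its coefficient function. *)
Definition contract (u : series) (f : DP) : 'X_{1..r} -> K := fun g =>
  \sum_(m <- msupp f) f@_m * (if lem g m then u (m - g)%MM else 0).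

Definition Ann (f : DP) (u : series) : Prop := forall g, contract u f g = 0.

Definition hpart (f : DP) (i : nat) : DP :=
  \sum_(m <- msupp f | mdeg m == i) f@_m *: 'X_[m].

Definition ftop (f : DP) (j a : nat) : DP :=
  \sum_(j - a <= i < j.+1) hpart f i.

Definition is_socle_deg (f : DP) (j : nat) : Prop :=
  ~ (forall u, mpowR j u -> Ann f u) /\ (forall u, mpowR j.+1 u -> Ann f u).

Definition socle_deg (f : DP) : nat := epsilon (inhabits 0%N) (is_socle_deg f).

Definition sumset (U W : series -> Prop) (u : series) : Prop :=
  exists v w, U v /\ W w /\ u = sadd v w.

Definition lincomb n (c : 'I_n -> K) (v : 'I_n -> series) : series :=
  fun g => \sum_(k < n) c k * v k g.

(* dim_K (U / W) = n  (U, W subspaces of R with W included in U) *)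
Definition qdim_is (U W : series -> Prop) (n : nat) : Prop :=
  (exists v : 'I_n -> series, (forall k, U (v k)) /\
     forall c : 'I_n -> K, W (lincomb c v) -> forall k, c k = 0) /\
  (forall v : 'I_n.+1 -> series, (forall k, U (v k)) ->
     exists2 c : 'I_n.+1 -> K, W (lincomb c v) & exists k, c k != 0).

Definition qdim (U W : series -> Prop) : nat := epsilon (inhabits 0%N) (qdim_is U W).

(* preimage in R of (0 : m_A^k), A = R/Ann f *)
Definition colon (f : DP) (k : nat) (u : series) : Prop :=
  forall v, mpowR k v -> Ann f (smul u v).

(* preimage in R of  m_A^i /\ (0 : m_A^(j+1-a-i))  (+ m_A^(i+1)), i.e. the
   preimage of the degree-i component C_A(a)_i inside m_A^i/m_A^(i+1) *)
Definition Cpre (f : DP) (a i : nat) : series -> Prop :=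
  let j := socle_deg f in
  sumset (fun u => mpowR i u /\ colon f (j.+1 - a - i) u)
         (sumset (mpowR i.+1) (Ann f)).

Definition HF (f : DP) (a : nat) : nat -> nat := fun i =>
  qdim (Cpre f a i) (Cpre f a.+1 i).

Definition psd (f : DP) (a : nat) : seq (nat -> nat) :=
  [seq HF f b | b <- iota 0 a.+1].

Definition modification (f g : DP) (b : nat) : Prop :=
  forall u, mpowR ((socle_deg f).+1 - b) u -> (Ann f u <-> Ann g u).

End Gorenstein.

(* Main.v *)
Require Import Defs.
From HB Require Import structures.
From mathcomp Require Import all_boot all_order all_algebra.
From mathcomp Require Import mpoly.
From mathcomp Require Import zify.
From mathcomp.algebra_tactics Require Import ring.
From Stdlib Require Import ClassicalEpsilon FunctionalExtensionality PropExtensionality.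

Set Implicit Arguments.
Unset Strict Implicit.
Unset Printing Implicit Defensive.
Import GRing.Theory.
Local Open Scope ring_scope.

Section Work.
Variables (K : fieldType) (r : nat).
Local Notation mon := ('X_{1..r}).
Local Notation ser := (series K r).

Lemma lem_mdeg (m1 m2 : mon) : (m1 <= m2)%MM -> (mdeg m1 <= mdeg m2)%N.
Proof. by move=> h; rewrite -(submK h) mdegD leq_addl. Qed.

Lemma mdegB_eq (m1 m2 : mon) : (m2 <= m1)%MM -> mdeg (m1 - m2)%MM = (mdeg m1 - mdeg m2)%N.
Proof. by move=> h; rewrite -{2}(submK h) mdegD addnK. Qed.

Lemma sumX N (s : seq mon) (F : mon -> K) : uniq s ->
  (forall m, m \in s -> (mdeg m < N)%N) ->
  (forall m, (mdeg m < N)%N -> m \notin s -> F m = 0) ->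
  \sum_(x : 'X_{1..r < N}) F x = \sum_(m <- s) F m.
Proof.
move=> us sN F0.
have -> : \sum_(x : 'X_{1..r < N}) F x = \sum_(m <- map val (index_enum 'X_{1..r < N})) F m.
  by rewrite big_map.
set s0 := map _ _.
have us0 : uniq s0 by rewrite map_inj_uniq ?index_enum_uniq //; apply: val_inj.
have ms0 m : (m \in s0) = (mdeg m < N)%N.
  apply/mapP/idP => [[x _ ->]|h]; first exact: bmdeg.
  by exists (BMultinom h); rewrite ?mem_index_enum.
have -> : \sum_(m <- s0) F m = \sum_(m <- s0 | m \in s) F m.
  rewrite [RHS]big_mkcond /=; apply: eq_big_seq => m hm.
  by case: ifP => // /negbT h; apply: F0; rewrite // -ms0.
have -> : \sum_(m <- s) F m = \sum_(m <- s | m \in s0) F m.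
  rewrite [RHS]big_mkcond /=; apply: eq_big_seq => m hm.
  by rewrite ms0 sN.
rewrite -big_filter -[RHS]big_filter; apply: perm_big; apply: uniq_perm; rewrite ?filter_uniq //.
by move=> m; rewrite !mem_filter andbC.
Qed.


Ltac mnm_solve :=
  repeat match goal with H : is_true (lem _ _) |- _ => generalize (elimT mnm_lepP H); clear H; intro H end;
  first [apply/mnm_lepP; intros i | apply/mnmP; intros i | idtac];
  repeat match goal with H : forall i : 'I_r, _ |- _ => specialize (H i) end;
  repeat match goal with H : is_true (_ <= _)%N |- _ => revert H end;
  rewrite ?mnmBE ?mnmDE ?mnm0E; intros; lia.

Lemma lem_tr (a b c : mon) : (a <= b)%MM -> (b <= c)%MM -> (a <= c)%MM.
Proof. move=> h1 h2; mnm_solve. Qed.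
Lemma lem_sub (a b : mon) : (a - b <= a)%MM.
Proof. mnm_solve. Qed.

Lemma M1 (a y : mon) : (a <= y)%MM -> (y - (y - a))%MM = a.
Proof. move=> h; mnm_solve. Qed.
Lemma M2 (a y g : mon) : (a <= y - g)%MM -> (g <= y)%MM -> (g <= y - a)%MM.
Proof. move=> h1 h2; mnm_solve. Qed.
Lemma M3 (a y g : mon) : (y - a - g)%MM = (y - g - a)%MM.
Proof. mnm_solve. Qed.
Lemma M4 (x y g : mon) : (g <= x)%MM -> (x <= y)%MM -> (y - x <= y - g)%MM.
Proof. move=> h1 h2; mnm_solve. Qed.
Lemma M5 (x z : mon) : (x <= z)%MM -> ((z - x)%MM == 0%MM) = (z == x).
Proof.
move=> h; apply/eqP/eqP => e; last by rewrite e; mnm_solve.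
apply/mnmP => i; move/mnmP: e => /(_ i); move/mnm_lepP: h => /(_ i).
rewrite mnmBE mnm0E; lia.
Qed.

Definition cF N (v : ser) (phi : mon -> K) : mon -> K := fun g =>
  \sum_(x : 'X_{1..r < N}) phi x * (if (g <= x)%MM then v (x - g)%MM else 0).

Lemma contractE N u (f : DP K r) : (forall m, m \in msupp f -> (mdeg m < N)%N) ->
  forall g, contract u f g = cF N u (fun m => f@_m) g.
Proof.
move=> h g; rewrite /cF (sumX (s := msupp f) (F := fun m => f@_m * (if (g <= m)%MM then u (m - g)%MM else 0))) ?msupp_uniq //.
by move=> m _ hm; rewrite memN_msupp_eq0 // mul0r.
Qed.

Lemma sum_single N (m0 : mon) (F : mon -> K) : (mdeg m0 < N)%N ->
  (forall m, m != m0 -> F m = 0) -> \sum_(x : 'X_{1..r < N}) F x = F m0.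
Proof.
move=> h0 hF; rewrite (sumX (s := [:: m0])) ?big_seq1 //.
- by move=> m; rewrite inE => /eqP ->.
- by move=> m _; rewrite inE; apply: hF.
Qed.

Lemma lem_seq (mu : mon) : {s : seq mon | uniq s & forall m, (m \in s) = (m <= mu)%MM}.
Proof.
exists [seq m <- map val (index_enum 'X_{1..r < (mdeg mu).+1}) | (m <= mu)%MM].
  by rewrite filter_uniq // map_inj_uniq ?index_enum_uniq //; apply: val_inj.
move=> m; rewrite mem_filter andbC; case: (boolP (m <= mu)%MM) => //= h.
rewrite ?andbT; apply/mapP; have hd : (mdeg m < (mdeg mu).+1)%N by rewrite ltnS lem_mdeg.
by exists (BMultinom hd); rewrite ?mem_index_enum.
by rewrite andbF.
Qed.

Lemma inner N (y g : mon) (u v : ser) : (mdeg y < N)%N -> (g <= y)%MM ->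
  \sum_(x : 'X_{1..r < N}) ((if (x <= y)%MM then u (y - x)%MM else 0) *
      (if (g <= x)%MM then v (x - g)%MM else 0)) = smul u v (y - g)%MM.
Proof.
move=> hy hgy; case: (lem_seq (y - g)%MM) => s1 us1 ms1.
rewrite /smul [RHS]big_mkcond /= [RHS](sumX (s := s1) (F := fun al => if (al <= y - g)%MM then u al * v (y - g - al)%MM else 0)) //; last first.
  by move=> m _; rewrite ms1 => /negbTE ->.
  by move=> m; rewrite ms1 => h; rewrite ltnS lem_mdeg.
rewrite (sumX (s := map (fun a => (y - a)%MM) s1) (F := fun x => (if (x <= y)%MM then u (y - x)%MM else 0) * (if (g <= x)%MM then v (x - g)%MM else 0))).
- rewrite big_map; apply: eq_big_seq => a; rewrite ms1 => ha.
  rewrite lem_sub M1; last by exact: lem_tr ha (lem_sub _ _).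
  by rewrite ha M2 // M3.
- rewrite map_inj_in_uniq // => a1 a2; rewrite !ms1 => h1 h2 e.
  have l1 := lem_tr h1 (lem_sub _ _).
  have l2 := lem_tr h2 (lem_sub _ _).
  by rewrite -(M1 l1) e M1.
- move=> m /mapP [a _ ->]; apply: leq_ltn_trans hy; apply: lem_mdeg; apply: lem_sub.
- move=> m _ hm; case: ifP => h1; last by rewrite mul0r.
  case: ifP => h2; last by rewrite mulr0.
  exfalso; move/negP: hm; apply; apply/mapP; exists (y - m)%MM; last by rewrite M1.
  by rewrite ms1 M4.
Qed.

Lemma assoc N (u v : ser) (phi : mon -> K) g :
  cF N v (cF N u phi) g = cF N (smul u v) phi g.
Proof.
rewrite /cF; under eq_bigr do rewrite mulr_suml.
rewrite exchange_big /=; apply: eq_bigr => y _.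
under eq_bigr do rewrite -mulrA; rewrite -mulr_sumr; congr (_ * _).
case: ifP => hgy; first exact: inner (bmdeg y) hgy.
apply: big1 => x _; case: ifP => h1; last by rewrite mul0r.
case: ifP => h2; last by rewrite mulr0.
by rewrite (lem_tr h2 h1) in hgy.
Qed.

Definition delta (m0 : mon) : ser := fun g => if g == m0 then 1 else 0.
Definition Dk (f : DP K r) k (w : ser) := forall g : mon, (k <= mdeg g)%N -> contract w f g = 0.

Lemma lem0 (m : mon) : (0 <= m)%MM.
Proof. mnm_solve. Qed.

Lemma cF_supp N v phi g : (N <= mdeg g)%N -> cF N v phi g = 0.
Proof.
move=> h; apply: big1 => x _; case: ifP => hx; last by rewrite mulr0.
by have := lem_mdeg hx; have := bmdeg x; lia.
Qed.

Lemma cF_delta N psi (g : mon) : (mdeg g < N)%N -> cF N (delta g) psi 0%MM = psi g.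
Proof.
move=> hg; rewrite /cF (sum_single (m0 := g) (F := fun m => psi m * (if (0 <= m)%MM then delta g (m - 0)%MM else 0))) //.
  by rewrite lem0 subm0 /delta eqxx mulr1.
by move=> m hm; rewrite lem0 subm0 /delta (negbTE hm) mulr0.
Qed.

Lemma colonD N (f : DP K r) k w : (forall m, m \in msupp f -> (mdeg m < N)%N) ->
  colon f k w <-> Dk f k w.
Proof.
move=> hN; split.
- move=> hc g hg.
  have hd : mpowR k (delta g).
    move=> al hal; rewrite /delta; case: eqP => // e; rewrite e in hal; lia.
  have := hc (delta g) hd 0%MM; rewrite !(contractE _ hN) -assoc.
  case: (ltnP (mdeg g) N) => hgN; first by rewrite cF_delta.
  by move=> _; rewrite cF_supp.
- move=> hD v hv g; rewrite (contractE _ hN) -assoc {1}/cF; apply: big1 => x _.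
  rewrite -(contractE _ hN); case: (leqP k (mdeg x)) => hk; first by rewrite hD // mul0r.
  case: ifP => hx; last by rewrite mulr0.
  rewrite hv ?mulr0 //; apply: leq_ltn_trans hk; exact: mdegB.
Qed.

Lemma contract_lin (f : DP K r) n (c : 'I_n -> K) v g :
  contract (lincomb c v) f g = \sum_(k < n) c k * contract (v k) f g.
Proof.
rewrite /contract /lincomb.
transitivity (\sum_(m <- msupp f) \sum_(k < n) f@_m * (c k * (if (g <= m)%MM then v k (m - g)%MM else 0))).
  apply: eq_bigr => m _; rewrite -mulr_sumr; congr (_ * _); case: ifP => // _.
  by rewrite big1 // => k _; rewrite mulr0.
rewrite exchange_big /=; apply: eq_bigr => k _; rewrite mulr_sumr; apply: eq_bigr => m _.
by rewrite mulrCA.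
Qed.

Lemma contract_sub (f : DP K r) (x y : ser) g :
  contract (fun g => x g - y g) f g = contract x f g - contract y f g.
Proof.
rewrite /contract -sumrB; apply: eq_bigr => m _; case: ifP => _; last by rewrite !mulr0 subr0.
by rewrite mulrBr.
Qed.

Lemma contract_add (f : DP K r) (x y : ser) g :
  contract (sadd x y) f g = contract x f g + contract y f g.
Proof.
rewrite /contract -big_split; apply: eq_bigr => m _; case: ifP => _; last by rewrite /= !mulr0 addr0.
by rewrite /= /sadd mulrDr.
Qed.

Lemma smul_lin (u : ser) n (c : 'I_n -> K) v :
  smul u (lincomb c v) = lincomb c (fun k => smul u (v k)).
Proof.
apply: functional_extensionality => g; rewrite /smul /lincomb.
under eq_bigr do rewrite mulr_sumr.
rewrite exchange_big /=; apply: eq_bigr => k _; rewrite mulr_sumr; apply: eq_bigr => m _.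
by rewrite mulrCA.
Qed.

Lemma smul_sub (u x y : ser) : smul u (fun g => x g - y g) = (fun g => smul u x g - smul u y g).
Proof.
apply: functional_extensionality => g; rewrite /smul -sumrB; apply: eq_bigr => m _.
by rewrite mulrBr.
Qed.

Lemma smul_add (u x y : ser) : smul u (sadd x y) = sadd (smul u x) (smul u y).
Proof.
apply: functional_extensionality => g; rewrite /smul /sadd -big_split; apply: eq_bigr => m _.
by rewrite mulrDr.
Qed.

Lemma smul_mpow (u w : ser) i : mpowR i w -> mpowR i (smul u w).
Proof.
move=> hw g hg; apply: big1 => al _; rewrite hw ?mulr0 //.
by apply: leq_ltn_trans hg; exact: mdegB.
Qed.

Lemma mpow_mono i i' (w : ser) : (i <= i')%N -> mpowR i' w -> mpowR i w.
Proof. by move=> h hw al hal; apply: hw; apply: leq_trans h. Qed.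

Lemma sext (u v : ser) : u =1 v -> u = v.
Proof. exact: functional_extensionality. Qed.

Definition subsp (X : ser -> Prop) := forall n (c : 'I_n -> K) (v : 'I_n -> ser),
  (forall k, X (v k)) -> X (lincomb c v).

Lemma subsp0 X : subsp X -> X (fun _ => 0).
Proof.
move=> hX; have := hX 0%N (fun _ => 0) (fun _ _ => 0) (fun k => match k with Ordinal _ h => False_ind _ (notF h) end).
suff -> : @lincomb K r 0 (fun _ => 0) (fun _ _ => 0) = (fun _ => 0) by [].
by apply: sext => g; rewrite /lincomb big_ord0.
Qed.

Definition two (a b : ser) : 'I_2 -> ser := fun k => if k == ord0 then a else b.

Lemma subspD X a b : subsp X -> X a -> X b -> X (sadd a b).
Proof.
move=> hX ha hb; have := hX 2%N (fun _ => 1) (two a b) (fun k => if k == ord0 as bb return X (if bb then a else b) then ha else hb).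
suff -> : lincomb (fun _ : 'I_2 => 1 : K) (two a b) = sadd a b by [].
by apply: sext => g; rewrite /lincomb big_ord_recl big_ord1 /two /= !mul1r.
Qed.

Lemma subspB X a b : subsp X -> X a -> X b -> X (fun g => a g - b g).
Proof.
move=> hX ha hb; have := hX 2%N (fun k => if k == ord0 then 1 else -1) (two a b) (fun k => if k == ord0 as bb return X (if bb then a else b) then ha else hb).
suff -> : lincomb (fun k : 'I_2 => if k == ord0 then 1 else -1 : K) (two a b) = (fun g => a g - b g) by [].
by apply: sext => g; rewrite /lincomb big_ord_recl big_ord1 /two /= mul1r mulN1r.
Qed.

Lemma fchoice (T A : Type) (P : T -> A -> Prop) : (forall k, exists x, P k x) -> exists f, forall k, P k (f k).
Proof.
move=> h; exists (fun k => proj1_sig (constructive_indefinite_description _ (h k))).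
by move=> k; exact: proj2_sig (constructive_indefinite_description _ (h k)).
Qed.

Lemma lincomb_add n (c : 'I_n -> K) (s t : 'I_n -> ser) :
  lincomb c (fun k => sadd (s k) (t k)) = sadd (lincomb c s) (lincomb c t).
Proof.
apply: sext => g; rewrite /lincomb /sadd -big_split.
by apply: eq_bigr => k _; rewrite mulrDr.
Qed.

Lemma subsp_sumset X Y : subsp X -> subsp Y -> subsp (sumset X Y).
Proof.
move=> hX hY n c v hv.
have [s hs] := fchoice hv.
have [t ht] := fchoice hs.
exists (lincomb c s), (lincomb c t); split; first by apply: hX => k; case: (ht k).
split; first by apply: hY => k; case: (ht k) => _ [].
have -> : v = (fun k => sadd (s k) (t k)).
  by apply: functional_extensionality => k; case: (ht k) => _ [].
exact: lincomb_add.
Qed.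

Lemma subsp_and X Y : subsp X -> subsp Y -> subsp (fun u => X u /\ Y u).
Proof. by move=> hX hY n c v hv; split; [apply: hX | apply: hY] => k; case: (hv k). Qed.

Lemma subsp_ext X Y : (forall u, X u <-> Y u) -> subsp X -> subsp Y.
Proof. by move=> e hX n c v hv; apply/e; apply: hX => k; apply/e. Qed.

Lemma subsp_mpow i : subsp (mpowR i).
Proof. by move=> n c v hv al hal; rewrite /lincomb big1 // => k _; rewrite hv ?mulr0. Qed.

Lemma subsp_D f k : subsp (Dk f k).
Proof. by move=> n c v hv g hg; rewrite contract_lin big1 // => l _; rewrite hv ?mulr0. Qed.

Lemma subsp_Ann f : subsp (Ann f).
Proof. by move=> n c v hv g; rewrite contract_lin big1 // => l _; rewrite hv ?mulr0. Qed.

Lemma lincomb_decomp m (c : 'I_m -> K) (v w : 'I_m -> ser) :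
  lincomb c v = sadd (lincomb c w) (lincomb c (fun k g => v k g - w k g)).
Proof.
apply: sext => g; rewrite /lincomb /sadd -big_split; apply: eq_bigr => k _ /=.
by rewrite -mulrDr addrC subrK.
Qed.

Lemma transfer (U W U' W' : ser -> Prop) (psi : ser -> ser) n :
  subsp U' -> subsp W ->
  (forall m (c : 'I_m -> K) v, psi (lincomb c v) = lincomb c (fun k => psi (v k))) ->
  (forall x, U' x -> U (psi x)) ->
  (forall y, U y -> exists2 x, U' x & W (fun g => y g - psi x g)) ->
  (forall x, U' x -> (W' x <-> W (psi x))) ->
  qdim_is U' W' n <-> qdim_is U W n.
Proof.
move=> hU' hW hlin hUU hsurj hcomp.
have hch : forall m (v : 'I_m -> ser), (forall k, U (v k)) ->
    exists x : 'I_m -> ser, forall k, U' (x k) /\ W (fun g => v k g - psi (x k) g).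
  move=> m v hv; apply: (fchoice (P := fun k x => U' x /\ W (fun g => v k g - psi x g))) => k; case: (hsurj _ (hv k)) => x h1 h2; by exists x.
split.
- case=> [[v [hv hind]] hdep]; split.
  + exists (fun k => psi (v k)); split; first by move=> k; apply: hUU.
    move=> c hc; apply: (hind c); apply/(hcomp (lincomb c v) (hU' _ c v hv)); rewrite hlin; exact: hc.
  + move=> w hw; have [x hx] := hch _ w hw.
    have [c hc hk] := hdep x (fun k => (hx k).1).
    exists c => //.
    have := (hcomp (lincomb c x) (hU' _ c x (fun k => (hx k).1))).1 hc; rewrite hlin => h.
    rewrite (lincomb_decomp c w (fun k => psi (x k))); apply: (subspD hW h).
    by apply: hW => k; exact: (hx k).2.
- case=> [[v [hv hind]] hdep]; split.
  + have [x hx] := hch _ v hv.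
    exists x; split; first by move=> k; exact: (hx k).1.
    move=> c hc; apply: hind.
    have h : W (lincomb c (fun k => psi (x k))).
      by rewrite -hlin; apply/(hcomp (lincomb c x) (hU' _ c x (fun k => (hx k).1))).
    rewrite (lincomb_decomp c v (fun k => psi (x k))); apply: (subspD hW h).
    by apply: hW => k; exact: (hx k).2.
  + move=> x hx; have [c hc hk] := hdep (fun k => psi (x k)) (fun k => hUU _ (hx k)).
    exists c => //; apply/(hcomp (lincomb c x) (hU' _ c x hx)); rewrite hlin; exact: hc.
Qed.

Definition Sd (f : DP K r) j b i : ser -> Prop := fun w => mpowR i w /\ Dk f (j.+1 - b - i) w.
Definition Wd (f : DP K r) j b i := sumset (Sd f j b.+1 i) (mpowR i.+1).

Lemma subsp_Sd f j b i : subsp (Sd f j b i).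
Proof. exact: subsp_and (@subsp_mpow i) (@subsp_D f _). Qed.

Lemma subsp_Wd f j b i : subsp (Wd f j b i).
Proof. exact: subsp_sumset (@subsp_Sd f j b.+1 i) (@subsp_mpow i.+1). Qed.

Lemma Q1 N (P : DP K r) j b i n : (forall m, m \in msupp P -> (mdeg m < N)%N) ->
  socle_deg P = j ->
  qdim_is (Cpre P b i) (Cpre P b.+1 i) n <-> qdim_is (Sd P j b i) (Wd P j b i) n.
Proof.
move=> hN hs; rewrite /Cpre hs /=.
have hcol k : subsp (fun u => mpowR i u /\ colon P k u).
  apply: subsp_and (@subsp_mpow i) _.
  exact: subsp_ext (fun u => iff_sym (colonD k u hN)) (@subsp_D P k).
have hT : subsp (sumset (mpowR i.+1) (Ann P)).
  exact: subsp_sumset (@subsp_mpow i.+1) (@subsp_Ann P).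
symmetry; apply: (transfer (psi := id)).
- exact: subsp_Sd.
- exact: subsp_sumset (hcol _) hT.
- by [].
- move=> x [hx1 hx2]; exists x, (fun _ => 0); split; first (split; [exact: hx1 | apply/(colonD _ _ hN); exact: hx2]).
  split; first exact: subsp0 hT.
  by apply: sext => g; rewrite /sadd addr0.
- move=> y [s [t [[hs1 hs2] [ht ->]]]]; exists s; first by split => //; apply/(colonD _ _ hN).
  exists (fun _ => 0), t; split; first exact: subsp0 (hcol _).
  split => //; apply: sext => g; rewrite /sadd /=.
  ring.
- move=> x [hx1 hx2]; split.
  + move=> [s [t [[hs1 hs2] [ht ->]]]]; exists s, (sadd t (fun _ => 0)).
    split; first by split => //; apply/(colonD _ _ hN).
    split; last by apply: sext => g; rewrite /sadd addr0.
    by exists t, (fun _ => 0); split => //; split; [exact: subsp0 (@subsp_Ann P) | by []].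
  + move=> [s [w [[hs1 hs2] [[t [a [ht [ha ew]]]] ex]]]].
    have ea : forall g, a g = x g - s g - t g.
      by move=> g; rewrite ex ew /sadd; ring.
    exists (sadd s a), t; split; last first.
      split => //; apply: sext => g; rewrite ex ew /sadd; ring.
    split.
    * move=> al hal; rewrite /sadd ea hx1 // hs1 // ht ?subr0 ?addr0 //; lia.
    * move=> g hg; rewrite contract_add ha addr0; exact: ((colonD _ _ hN).1 hs2 g hg).
Qed.

Lemma socle_eq (P : DP K r) j : (forall m, m \in msupp P -> (mdeg m < j.+1)%N) ->
  (exists m0, mdeg m0 = j /\ P@_m0 != 0) -> socle_deg P = j.
Proof.
move=> hN [m0 [hm0 hP]].
have hs : is_socle_deg P j.
  split.
  - move=> hall.
    have hd : mpowR j (delta m0).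
      move=> al hal; rewrite /delta; case: eqP => // e; rewrite e in hal; lia.
    have := hall _ hd 0%MM; rewrite (contractE _ hN) cF_delta ?hm0 //.
    by move=> e; rewrite e eqxx in hP.
  - move=> u hu g; rewrite (contractE _ hN); apply: big1 => x _.
    case: ifP => hx; last by rewrite mulr0.
    rewrite hu ?mulr0 //; apply: leq_ltn_trans (bmdeg x); exact: mdegB.
rewrite /socle_deg.
have := epsilon_spec (inhabits 0%N) (is_socle_deg P) (ex_intro _ j hs).
set j' := epsilon _ _ => -[h1' h2']; case: hs => h1 h2.
have le1 : (j' <= j)%N.
  rewrite leqNgt; apply/negP => lt; apply: h1' => u hu; apply: h2.
  by apply: mpow_mono hu.
have le2 : (j <= j')%N.
  rewrite leqNgt; apply/negP => lt; apply: h1 => u hu; apply: h2'.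
  by apply: mpow_mono hu.
by apply/eqP; rewrite eqn_leq le1 le2.
Qed.

Lemma msize_socle (P : DP K r) j : msize P = j.+1 ->
  (forall m, m \in msupp P -> (mdeg m < j.+1)%N) /\ socle_deg P = j.
Proof.
move=> hs.
have hN : forall m, m \in msupp P -> (mdeg m < j.+1)%N.
  by move=> m hm; rewrite -hs; apply: msize_mdeg_lt.
split => //; apply: socle_eq => //.
case: (boolP (has (fun m => mdeg m == j) (msupp P))).
  by move=> /hasP [m hm /eqP e]; exists m; split => //; rewrite -mcoeff_msupp.
move=> /hasPn hn; exfalso.
have : (msize P <= j)%N.
  rewrite msizeE; apply/bigmax_leqP_seq => m hm _.
  by have := hN m hm; have := hn m hm; move=> /eqP; lia.
by rewrite hs ltnn.
Qed.

Lemma Loc N d i (phi1 phi2 : mon -> K) (w : ser) g :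
  (forall x, (d <= mdeg x)%N -> phi1 x = phi2 x) -> mpowR i w -> (d <= mdeg g + i)%N ->
  cF N w phi1 g = cF N w phi2 g.
Proof.
move=> he hw hg; apply: eq_bigr => x _.
case: (leqP d (mdeg x)) => hx; first by rewrite he.
case: ifP => hgx; last by rewrite !mulr0.
rewrite hw ?mulr0 // mdegB_eq //; have := lem_mdeg hgx; lia.
Qed.

Lemma sum_eqseq (T : eqType) (s : seq T) (a : T) (F : T -> K) : uniq s ->
  \sum_(x <- s) (if x == a then F x else 0) = if a \in s then F a else 0.
Proof.
move=> us; case: (boolP (a \in s)) => h.
  rewrite (bigD1_seq a) //= eqxx big1 ?addr0 // => i /negbTE ->; by [].
by rewrite big1_seq // => i /andP [_ hi]; case: eqP => // e; rewrite -e hi in h.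
Qed.

Lemma ftop_coef (f : DP K r) j a m :
  (ftop f j a)@_m = if (j - a <= mdeg m < j.+1)%N then f@_m else 0.
Proof.
rewrite /ftop /hpart raddf_sum /=.
transitivity (\sum_(j - a <= i < j.+1) (if i == mdeg m then f@_m else 0)).
  apply: eq_bigr => i _; rewrite raddf_sum /= big_mkcond /=.
  transitivity (\sum_(m' <- msupp f) (if m' == m then (if mdeg m == i then f@_m else 0) else 0)).
    apply: eq_bigr => m' _; rewrite mcoeffZ mcoeffX.
    case: (m' =P m) => [->|ne]; first by case: (mdeg m == i); rewrite ?eqxx ?mulr1.
    by case: (mdeg m' == i); rewrite ?mulr0.
  rewrite sum_eqseq ?msupp_uniq //; rewrite eq_sym.
  case: (boolP (m \in msupp f)) => // hm; rewrite memN_msupp_eq0 //.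
  by case: (i == mdeg m).
rewrite sum_eqseq; last by rewrite /index_iota iota_uniq.
by rewrite mem_index_iota.
Qed.

Lemma top_mon (P : DP K r) j : msize P = j.+1 -> exists m0, mdeg m0 = j /\ P@_m0 != 0.
Proof.
move=> hs.
have hN : forall m, m \in msupp P -> (mdeg m < j.+1)%N.
  by move=> m hm; rewrite -hs; apply: msize_mdeg_lt.
case: (boolP (has (fun m => mdeg m == j) (msupp P))).
  by move=> /hasP [m hm /eqP e]; exists m; split => //; rewrite -mcoeff_msupp.
move=> /hasPn hn; exfalso.
have : (msize P <= j)%N.
  rewrite msizeE; apply/bigmax_leqP_seq => m hm _.
  by have := hN m hm; have := hn m hm; move=> /eqP; lia.
by rewrite hs ltnn.
Qed.

Lemma psd_eq (P Q : DP K r) a :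
  (forall b, (b <= a)%N -> forall i n,
     qdim_is (Cpre P b i) (Cpre P b.+1 i) n <-> qdim_is (Cpre Q b i) (Cpre Q b.+1 i) n) ->
  psd P a = psd Q a.
Proof.
move=> h; rewrite /psd; apply/eq_in_map => b; rewrite mem_iota add0n ltnS => /andP [_ hb].
apply: functional_extensionality => i; rewrite /qdim; congr epsilon.
apply: functional_extensionality => n; apply: propositional_extensionality; exact: h.
Qed.

Lemma UU N (f : DP K r) (u u' y : ser) g : (forall m, m \in msupp f -> (mdeg m < N)%N) ->
  smul u u' = @sone K r -> contract (smul u (smul u' y)) f g = contract y f g.
Proof.
move=> hN hu; rewrite !(contractE _ hN) -assoc -assoc; apply: eq_bigr => x _; congr (_ * _).
rewrite assoc hu /cF.
rewrite (sum_single (m0 := x) (F := fun m => f@_m * (if (x <= m)%MM then @sone K r (m - x)%MM else 0))) ?bmdeg //.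
  by rewrite lepm_refl /sone M5 ?lepm_refl // eqxx mulr1.
move=> m hm; case: ifP => hx; last by rewrite mulr0.
by rewrite /sone M5 // (negbTE hm) mulr0.
Qed.

Lemma subsp_Dsmul f k (u : ser) : subsp (fun w => Dk f k (smul u w)).
Proof. by move=> n c v hv; rewrite smul_lin; apply: subsp_D. Qed.

Lemma main (f : DP K r) (j a : nat) :
  msize f = j.+1 -> (a <= j)%N ->
  [/\ psd f a = psd (ftop f j a) a,
      (forall (g : DP K r) (u : series K r),
          msize g = j.+1 -> sunit u ->
          (forall m : 'X_{1..r}, (j - a <= mdeg m)%N -> g@_m = contract u f m) ->
          psd g a = psd f a)
    & modification f (ftop f j a) a.+1].
Proof.
move=> hf ha.
have [hNf hsf] := msize_socle hf.
set F := ftop f j a.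
have hcoefF : forall x, (j - a <= mdeg x)%N -> f@_x = F@_x.
  move=> x hx; rewrite /F ftop_coef; case: (ltnP (mdeg x) j.+1) => hx2.
    by rewrite hx.
  rewrite andbF memN_msupp_eq0 //; apply/negP => hm; have := hNf _ hm; lia.
have hNF : forall m, m \in msupp F -> (mdeg m < j.+1)%N.
  move=> m; rewrite mcoeff_msupp /F ftop_coef; case: ifP => [/andP [_ h]|] //.
  by rewrite eqxx.
have hsF : socle_deg F = j.
  apply: socle_eq hNF _; have [m0 [hm0 hfm0]] := top_mon hf; exists m0; split => //.
  by rewrite -hcoefF // hm0 leq_subr.
split.
- apply: psd_eq => b hb i n.
  rewrite (Q1 b i n hNf hsf) (Q1 b i n hNF hsF).
  have E : forall b', (b' <= a.+1)%N -> Sd f j b' i = Sd F j b' i.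
    move=> b' hb'; apply: functional_extensionality => w; apply: propositional_extensionality.
    have e : forall g, (j.+1 - b' - i <= mdeg g)%N -> mpowR i w -> contract w f g = contract w F g.
      move=> g hg hw; rewrite (contractE _ hNf) (contractE _ hNF).
      apply: (@Loc _ (j - a)) hw _; first exact: hcoefF.
      lia.
    rewrite /Sd; split => -[hw hD]; split => // g hg; first by rewrite -e ?hD.
    by rewrite e ?hD.
  rewrite /Wd !E //; lia.
- move=> g u hg [u' hu] hcoef.
  have [hNg hsg] := msize_socle hg.
  symmetry; apply: psd_eq => b hb i n.
  rewrite (Q1 b i n hNf hsf) (Q1 b i n hNg hsg).
  pose S' b' := fun w => mpowR i w /\ Dk f (j.+1 - b' - i) (smul u w).
  have E : forall b', (b' <= a.+1)%N -> Sd g j b' i = S' b'.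
    move=> b' hb'; apply: functional_extensionality => w; apply: propositional_extensionality.
    have e : forall γ, (j.+1 - b' - i <= mdeg γ)%N -> mpowR i w ->
        contract w g γ = contract (smul u w) f γ.
      move=> γ hγ hw; rewrite (contractE _ hNg) (contractE _ hNf) -assoc.
      apply: (@Loc _ (j - a)) hw _; last by lia.
      by move=> x hx; rewrite hcoef // (contractE _ hNf).
    rewrite /Sd /S'; split => -[hw hD]; split => // γ hγ; first by rewrite -e ?hD.
    by rewrite e ?hD.
  rewrite /Wd !E; try lia.
  symmetry; apply: (transfer (psi := smul u)).
  + exact: subsp_and (@subsp_mpow i) (@subsp_Dsmul f _ u).
  + exact: subsp_Wd.
  + by move=> m c v; rewrite smul_lin.
  + move=> x [hx1 hx2]; split; [exact: smul_mpow | exact: hx2].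
  + move=> y [hy1 hy2]; exists (smul u' y).
      split; first by apply: smul_mpow.
      by move=> γ hγ; rewrite (UU _ _ hNf hu) hy2.
    exists (fun γ => y γ - smul u (smul u' y) γ), (fun _ => 0); split.
      split; first by apply: (subspB (@subsp_mpow i)) => //; do 2 apply: smul_mpow.
      by move=> γ hγ; rewrite contract_sub (UU _ _ hNf hu) subrr.
    split; first exact: subsp0 (@subsp_mpow i.+1).
    by apply: sext => γ; rewrite /sadd addr0.
  + move=> x [hx1 hx2]; split.
    * move=> [s [t [[hs1 hs2] [ht ->]]]]; rewrite smul_add.
      exists (smul u s), (smul u t); split; first by split => //; exact: smul_mpow.
      by split => //; exact: smul_mpow.
    * move=> [s [t [[hs1 hs2] [ht ex]]]].
      have ht' : mpowR i.+1 (smul u' t) by exact: smul_mpow.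
      exists (fun γ => x γ - smul u' t γ), (smul u' t); split; last first.
        by split => //; apply: sext => γ; rewrite /sadd subrK.
      split.
        by apply: (subspB (@subsp_mpow i)) => //; apply: (mpow_mono (leqnSn i)).
      move=> γ hγ; rewrite smul_sub contract_sub ex contract_add (UU _ _ hNf hu).
      by rewrite hs2 // add0r subrr.
- rewrite /modification hsf => w hw.
  have e : forall γ, contract w f γ = contract w F γ.
    move=> γ; rewrite (contractE _ hNf) (contractE _ hNF).
    apply: (@Loc _ (j - a) (j.+1 - a.+1)) hw _; [exact: hcoefF | lia].
  by split => h γ; [rewrite -e h | rewrite e h].
Qed.

End Work.


Theorem corollary1p15 (K : fieldType) (r : nat) (f : DP K r) (j a : nat) :
  msize f = j.+1 -> (a <= j)%N ->
  [/\ psd f a = psd (ftop f j a) a,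
      (forall (g : DP K r) (u : series K r),
          msize g = j.+1 -> sunit u ->
          (forall m : 'X_{1..r}, (j - a <= mdeg m)%N -> g@_m = contract u f m) ->
          psd g a = psd f a)
    & modification f (ftop f j a) a.+1].
Proof. exact: main. Qed.
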